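(* Fix a vertex $\mu$. Let $fE=\widehat f\widehat E\neq0$ and $G$ be antinef divisors. Then for every vertex $\nu$, $$\lambda(G,\widehat f_{\langle\widehat f\rangle}\widehat E;\nu)\ge\lambda(G,fE;\nu),$$ with equality if and only if either $d(\mu,\nu)\le1$, or $\widehat f_j=0$ for every $j\in\Gamma^i_\nu$, where $i$ is the vertex of the path $[\mu,\nu]$ adjacent to $\mu$.
   Context: Setting: $R$ two-dimensional regular local ring with algebraically closed residue field; $\pi:X=X_{N+1}\to\cdots\to X_1=\operatorname{Spec}R$ a composition of point blowups; $E_\nu$ strict and $E^*_\nu$ total transforms of exceptional divisors; proximity matrix $P$ ($p_{\mu,\mu}=1$, $p_{\mu,\nu}=-1$ if $x_\mu$ lies on the strict transform on $X_\mu$ of the exceptional divisor of the blowup of $x_\nu$, else $0$), $Q=(q_{\mu,\nu})=P^{-1}$, $V=(P^TP)^{-1}$. Basis $\widehat E_\nu$ with $E_\mu\cdot\widehat E_\nu=-\delta_{\mu,\nu}$; $\widehat f\widehat E=\sum\widehat f_\nu\widehat E_\nu=\sum f_\nu E_\nu=fE$ with $f=\widehat fV$; antinef means $\widehat f\ge0$. $K=\sum E^*_\nu=\sum k_\nu E_\nu$. Dual graph $\Gamma$ on $1..N$, $\gamma\sim\eta$ iff $\gamma\ne\eta$ and $E_\gamma\cap E_\eta\neq\emptyset$; $d(\mu,\nu)$ the graph distance; $[\mu,\nu]$ the path; branch $\Gamma^\mu_\nu$ = maximal connected subgraph containing $\nu$ but not $\mu$ ($\Gamma^\mu_\mu=\emptyset$).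 $\lambda(F,G;\nu)=(f_\nu+k_\nu+1)/g_\nu$. Modification: $\mathbf 1_i$ standard basis vector of $\mathbb Q^\Gamma$; $\rho_{[\alpha,\beta]}(\nu)=V_{\beta,\nu}/V_{\alpha,\nu}$; $\widehat r_{[\alpha,\beta]}=\mathbf 1_\beta-\rho_{[\alpha,\beta]}(\alpha)\mathbf 1_\alpha$; $\widehat f_{\langle\widehat g\rangle}=\widehat f-\sum_{i\sim\mu}\sum_{j\in\Gamma^\mu_i}\widehat g_j\widehat r_{[i,j]}$. *)

(* Defs.v *)
(* Combinatorial model of a composition of point blowups
   X = X_{N+1} -> ... -> X_1 = Spec R via its proximity relation.
   Vertices 1..N of the paper are the ordinals 'I_N (0-based). *)
From HB Require Import structures.
From mathcomp Require Import all_boot all_order all_algebra.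
Set Implicit Arguments. Unset Strict Implicit. Unset Printing Implicit Defensive.
Import Order.TTheory GRing.Theory Num.Theory.
Local Open Scope ring_scope.

Section Blowups.
Variable N : nat.
(* prox a b : the centre x_a lies on the strict transform on X_a of the
   exceptional divisor of the blowup of x_b ("a is proximate to b"). *)
Variable prox : rel 'I_N.

(* Exact combinatorial characterisation of the proximity relations arising
   from a sequence of point blowups over an algebraically closed residue field. *)
Definition proximity_structure : Prop :=
  [/\ (forall a b, prox a b -> (b < a)%N),
      (* every centre other than the first lies on the exceptional locus *)
      (forall a : 'I_N, (0 < a)%N -> exists b, prox a b),
      (* it lies on at most two exceptional components (normal crossings) *)
      (forall a, (#|[set b | prox a b]| <= 2)%N),
      (* if it lies on E_b and E_c (b < c), these meet, so x_c lies on E_b *)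
      (forall a b c, prox a b -> prox a c -> (b < c)%N -> prox c b) &
      (* two strict transforms meet in at most one point *)
      (forall a a' b c, a != a' -> prox a b -> prox a c -> prox a' b ->
          prox a' c -> b = c)].

Definition Pmx : 'M[rat]_N :=
  \matrix_(a, b) (if a == b then 1 else if prox a b then -1 else 0).
Definition Qmx : 'M[rat]_N := invmx Pmx.
Definition Vmx : 'M[rat]_N := invmx (Pmx^T *m Pmx).

(* divisors sum_nu f_nu E_nu are represented by the row of E-coefficients f;
   fhat is defined by f = fhat V *)
Definition fhat (f : 'rV[rat]_N) : 'rV[rat]_N := f *m (Pmx^T *m Pmx).

Definition is_divisor (f : 'rV[rat]_N) : Prop :=
  forall nu, exists z : int, f 0 nu = z%:~R.

Definition antinef (f : 'rV[rat]_N) : Prop := forall nu, 0 <= fhat f 0 nu.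

(* E-coefficients of E*_nu:  E*_nu = sum_mu q_{mu,nu} E_mu *)
Definition Estar (nu : 'I_N) : 'rV[rat]_N := \row_mu Qmx mu nu.
(* K = sum_nu E*_nu = sum_nu k_nu E_nu *)
Definition Kcoef : 'rV[rat]_N := \sum_nu Estar nu.

Definition lambda (f g : 'rV[rat]_N) (nu : 'I_N) : rat :=
  (f 0 nu + Kcoef 0 nu + 1) / g 0 nu.

Definition adj (c d : 'I_N) : bool :=
  (c != d) && (prox c d || prox d c) && ~~ [exists a, prox a c && prox a d].

(* branch c x = Gamma^c_x : vertices of the connected component of x in
   Gamma minus c  (empty if x = c) *)
Definition branch (c x : 'I_N) : pred 'I_N :=
  fun j => (x != c) && connect [rel a b | adj a b && (a != c) && (b != c)] x j.

Definition unitv (j : 'I_N) : 'rV[rat]_N := \row_k (k == j)%:R.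
Definition rho (al be nu : 'I_N) : rat := Vmx be nu / Vmx al nu.
Definition rhat (al be : 'I_N) : 'rV[rat]_N := unitv be - rho al be al *: unitv al.

(* hat f_<hat g> relative to the fixed vertex mu *)
Definition modhat (mu : 'I_N) (fh gh : 'rV[rat]_N) : 'rV[rat]_N :=
  fh - \sum_(i | adj i mu) \sum_(j | branch mu i j) gh 0 j *: rhat i j.

(* E-coefficients of the divisor hat f_<hat f> hat E *)
Definition modE (mu : 'I_N) (f : 'rV[rat]_N) : 'rV[rat]_N :=
  modhat mu (fhat f) (fhat f) *m Vmx.

End Blowups.

(* Main.v *)
Require Import Defs.
From HB Require Import structures.
From mathcomp Require Import all_boot all_order all_algebra.
From mathcomp Require Import zify ring lra.
Set Implicit Arguments. Unset Strict Implicit. Unset Printing Implicit Defensive.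
Import Order.TTheory GRing.Theory Num.Theory.

Lemma conn_ind (T : finType) (e : rel T) (P : T -> Prop) x :
  P x -> (forall y z, e y z -> P y -> P z) -> forall y, connect e x y -> P y.
Proof.
move=> Px IH y /connectP[p]; elim: p x Px => [|z p IHp] x Px /=.
  by move=> _ ->.
by move=> /andP[exz pz] ey; apply: (IHp z (IH _ _ exz Px) pz ey).
Qed.

Lemma conn_sub (T : finType) (e e' : rel T) x y :
  (forall a b, e a b -> e' a b) -> connect e x y -> connect e' x y.
Proof. by move=> H; apply: connect_sub => a b /H; apply: connect1. Qed.

Lemma ctrans (T : finType) (e : rel T) x y z :
  connect e x y -> connect e y z -> connect e x z.
Proof. exact: connect_trans. Qed.

Section Graph.
Variable N : nat.
Variable prox : rel 'I_N.
Hypothesis Hps : proximity_structure prox.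

Lemma prox_lt a b : prox a b -> (b < a)%N.
Proof. by case: Hps => H _ _ _ _; apply: H. Qed.

Lemma prox_irr a : prox a a = false.
Proof. by apply/negP => /prox_lt; rewrite ltnn. Qed.

Lemma adj_sym x y : adj prox x y = adj prox y x.
Proof.
rewrite /adj eq_sym (orbC (prox x y)); congr (_ && ~~ _).
by apply: eq_existsb => a; rewrite andbC.
Qed.

Definition ek (k : nat) (x y : 'I_N) : bool :=
  [&& (x < k)%N, (y < k)%N, x != y, prox x y || prox y x &
      ~~ [exists a : 'I_N, [&& (a < k)%N, prox a x & prox a y]]].

Lemma adj_ek x y : adj prox x y = ek N x y.
Proof.
rewrite /adj /ek !ltn_ord /= -andbA; congr [&& _, _ & ~~ _].
by apply: eq_existsb => a; rewrite ltn_ord.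
Qed.

Definition Inv k (pi : 'I_N -> 'I_N) (r : 'I_N -> nat) : Prop :=
  [/\ forall z : 'I_N, (k <= z)%N -> pi z = z,
      forall z, pi z = z \/ (pi z < k)%N,
      forall z, pi z != z -> (r (pi z) < r z)%N &
      forall x y, ek k x y -> pi x = y \/ pi y = x].

Lemma ek_succ k (kk : 'I_N) x y : nat_of_ord kk = k -> ek k.+1 x y ->
  (x = kk /\ prox kk y) \/ (y = kk /\ prox kk x) \/
  (ek k x y /\ ~~ (prox kk x && prox kk y)).
Proof.
move=> Hkk /and5P[hx hy hxy hp hex].
have [ex|nex] := eqVneq x kk.
  left; split=> //; case/orP: hp; rewrite ex // => /prox_lt h.
  exfalso; lia.
have [ey|ney] := eqVneq y kk.
  right; left; split=> //; case/orP: hp; rewrite ey // => /prox_lt h.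
  exfalso; lia.
have hx' : (x < k)%N.
  by rewrite ltn_neqAle -ltnS hx andbT; apply: contra nex => /eqP e; apply/eqP/val_inj; rewrite /= Hkk.
have hy' : (y < k)%N.
  by rewrite ltn_neqAle -ltnS hy andbT; apply: contra ney => /eqP e; apply/eqP/val_inj; rewrite /= Hkk.
right; right; split.
  rewrite /ek hx' hy' hxy hp /=; apply: contra hex => /existsP[a /and3P[ha h1 h2]].
  by apply/existsP; exists a; rewrite h1 h2 andbT; lia.
apply: contra hex => /andP[h1 h2]; apply/existsP; exists kk; by rewrite h1 h2 Hkk ltnSn.
Qed.


Lemma prox3 a b c d : prox a b -> prox a c -> prox a d -> b != c -> d != b -> d != c -> False.
Proof.
move=> hb hc hd nbc ndb ndc; case: Hps => _ _ H3 _ _.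
have: (#|d |: [set b; c]| <= #|[set z | prox a z]|)%N.
  apply: subset_leq_card; apply/subsetP => z; rewrite !inE => /or3P[] /eqP ->; by rewrite ?hb ?hc ?hd.
rewrite cardsU1 cards2 nbc !inE negb_or ndb ndc /= => h.
by have := leq_trans h (H3 a).
Qed.

Lemma Inv_step k (kk : 'I_N) pi r : nat_of_ord kk = k -> Inv k pi r ->
  exists pi' r', Inv k.+1 pi' r'.
Proof.
move=> Hkk [Ia Ib Ic Id].
have pikk : pi kk = kk by apply: Ia; rewrite Hkk.
have pine z : z != kk -> pi z != kk.
  move=> nz; case: (Ib z) => [->//|]; apply: contraTneq => ->; by rewrite Hkk ltnn.
case: (pickP (prox kk)) => [u hu|nop]; last first.
  exists pi, r; split.
  - by move=> z hz; apply: Ia; apply: ltnW.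
  - by move=> z; case: (Ib z) => [->|h]; [left|right; apply: (ltn_trans h)].
  - exact: Ic.
  move=> x y /(ek_succ Hkk) [[_ h]|[[_ h]|[h _]]]; [by rewrite nop in h|by rewrite nop in h|exact: Id].
have ulk : (u < k)%N by rewrite -Hkk; apply: prox_lt.
case: (pickP [pred w | prox kk w && (w != u)]) => [w /andP[hw nwu] | nop]; last first.
  have onlyu z : prox kk z -> z = u.
    move=> hz; apply/eqP; apply: contraFT (nop z) => nz; by rewrite /= hz nz.
  pose pi' z := if z == kk then u else pi z.
  pose r' z := if z == kk then (r u).+1 else r z.
  have ukk : u != kk by apply: contraTneq ulk => ->; rewrite Hkk ltnn.
  exists pi', r'; split.
  - move=> z hz; have nz : z != kk by apply: contraTneq hz => ->; rewrite Hkk ltnn.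
    by rewrite /pi' (negbTE nz); apply: Ia; apply: ltnW.
  - move=> z; rewrite /pi'; case: eqP => _; first by right; apply: (ltn_trans ulk).
    by case: (Ib z) => [->|h]; [left|right; apply: (ltn_trans h)].
  - move=> z; rewrite /pi' /r'; case: (eqVneq z kk) => [->|nz].
      by move=> _; rewrite (negbTE ukk).
    by rewrite (negbTE (pine _ nz)) => h; apply: Ic.
  move=> x y /(ek_succ Hkk) [[-> h]|[[-> h]|[h _]]].
  - by left; rewrite /pi' eqxx (onlyu _ h).
  - by right; rewrite /pi' eqxx (onlyu _ h).
  have nx : x != kk by move: h => /and5P[hx _ _ _ _]; apply: contraTneq hx => ->; rewrite Hkk ltnn.
  have ny : y != kk by move: h => /and5P[_ hy _ _ _]; apply: contraTneq hy => ->; rewrite Hkk ltnn.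
  by rewrite /pi' (negbTE nx) (negbTE ny); apply: Id.
have wlk : (w < k)%N by rewrite -Hkk; apply: prox_lt.
have only2 z : prox kk z -> z = u \/ z = w.
  move=> hz; case: (eqVneq z u) => [|nzu]; first by left.
  case: (eqVneq z w) => [|nzw]; first by right.
  by exfalso; apply: (prox3 hu hw hz) => //; rewrite eq_sym.
have ekuw : ek k u w.
  case: Hps => _ _ _ H4 H5.
  rewrite /ek ulk wlk eq_sym nwu /=; apply/andP; split.
    case: (ltngtP u w) => [h|h|/val_inj e]; last by rewrite e eqxx in nwu.
    - by rewrite (H4 _ _ _ hu hw h) orbT.
    - by rewrite (H4 _ _ _ hw hu h).
  apply/existsP => [[a /and3P[ha h1 h2]]].
  have nak : a != kk by apply: contraTneq ha => ->; rewrite Hkk ltnn.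
  by move: nwu; rewrite (H5 _ _ _ _ nak h1 h2 hu hw) eqxx.
suff step2 (a b : 'I_N) : prox kk a -> prox kk b -> a != b ->
    (forall z, prox kk z -> z = a \/ z = b) -> pi b = a -> (a < k)%N -> (b < k)%N ->
    exists pi' r', Inv k.+1 pi' r'.
  case: (Id _ _ ekuw) => h.
  - apply: (step2 w u) => //.
    by move=> z /only2 []; auto.
  - by apply: (step2 u w) => //; rewrite eq_sym.
move=> ha hb nab onl piba alk blk.
pose pi' z := if z == kk then a else if z == b then kk else pi z.
pose r' z := if z == kk then (2 * r a).+1 else (2 * r z)%N.
have akk : a != kk by apply: contraTneq alk => ->; rewrite Hkk ltnn.
have bkk : b != kk by apply: contraTneq blk => ->; rewrite Hkk ltnn.
exists pi', r'; split.
- move=> z hz; have nz : z != kk by apply: contraTneq hz => ->; rewrite Hkk ltnn.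
  have nzb : z != b by apply: contraTneq hz => ->; lia.
  by rewrite /pi' (negbTE nz) (negbTE nzb); apply: Ia; apply: ltnW.
- move=> z; rewrite /pi'; case: eqP => _; first by right; apply: (ltn_trans alk).
  case: eqP => _; first by right; rewrite Hkk.
  by case: (Ib z) => [->|h]; [left|right; apply: (ltn_trans h)].
- move=> z; rewrite /pi' /r'; case: (eqVneq z kk) => [->|nz].
    by move=> _; rewrite (negbTE akk); lia.
  case: (eqVneq z b) => [->|nzb].
    move=> _; rewrite eqxx.
    have : (r a < r b)%N by rewrite -piba; apply: Ic; rewrite piba.
    lia.
  by rewrite (negbTE (pine _ nz)) => h; have := Ic _ h; lia.
move=> x y /(ek_succ Hkk) [[-> h]|[[-> h]|[h nb]]].
- case: (onl _ h) => ->; first by left; rewrite /pi' eqxx.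
  by right; rewrite /pi' eqxx (negbTE bkk).
- case: (onl _ h) => ->; first by right; rewrite /pi' eqxx.
  by left; rewrite /pi' eqxx (negbTE bkk).
have nx : x != kk by move: h => /and5P[hx _ _ _ _]; apply: contraTneq hx => ->; rewrite Hkk ltnn.
have ny : y != kk by move: h => /and5P[_ hy _ _ _]; apply: contraTneq hy => ->; rewrite Hkk ltnn.
rewrite /pi' (negbTE nx) (negbTE ny).
case: (Id _ _ h) => e.
- left; case: eqP => ex //; move: nb; by rewrite ex -e ex piba ha hb.
- right; case: eqP => ey //; move: nb; by rewrite ey -e ey piba ha hb.
Qed.

Lemma Inv_exists k : (k <= N)%N -> exists pi r, Inv k pi r.
Proof.
elim: k => [_|k IH hk].
  exists id, (fun _ => 0%N); split; [by []| by move=> z; left | by move=> z; rewrite eqxx | by move=> x y /and5P[]].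
have [pi [r Hi]] := IH (ltnW hk).
exact: (@Inv_step k (Ordinal hk) pi r erefl Hi).
Qed.


Definition Rm (x y : 'I_N) : rel 'I_N :=
  [rel a b | adj prox a b && ~~ (((a == x) && (b == y)) || ((a == y) && (b == x)))].

Lemma Rm_sym x y a b : Rm x y a b = Rm x y b a.
Proof. by rewrite /Rm /= adj_sym (orbC ((b == x) && _)) (andbC (a == x)) (andbC (a == y)). Qed.

Lemma Rm_swap x y a b : Rm x y a b = Rm y x a b.
Proof. by rewrite /Rm /= orbC. Qed.

Lemma adj_neq x y : adj prox x y -> x != y.
Proof. by case/andP => /andP[]. Qed.

Lemma bridge x y : adj prox x y -> ~~ connect (Rm x y) x y.
Proof.
have [pi [r [Ia Ib Ic Id]]] := Inv_exists (leqnn N).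
have rank n z : (r (iter n pi z) <= r z)%N.
  elim: n => [//|n IH]; rewrite iterS; case: (eqVneq (pi (iter n pi z)) (iter n pi z)) => [->//|h].
  by apply: leq_trans (ltnW (Ic _ h)) IH.
suff claim u v : adj prox u v -> pi v = u -> ~~ connect (Rm u v) v u.
  move=> hxy; case: (Id x y); first by rewrite -adj_ek.
  - move=> h; have := claim y x; rewrite adj_sym => /(_ hxy h).
    apply: contra => c; apply: conn_sub c => a b; by rewrite Rm_swap.
  - move=> h; have := claim x y hxy h; apply: contra => c.
    by rewrite (sym_connect_sym (@Rm_sym x y)).
move=> huv pvu; apply/negP => c.
have: exists n, iter n pi u = v.
  move: c; apply: (@conn_ind _ _ (fun z => exists n, iter n pi z = v)); first by exists 0%N.
  move=> a b /= /andP[hab hn] [n hn'].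
  case: (Id a b); first by rewrite -adj_ek.
  - move=> pab; case: n hn' => [/= av|m hm].
      by move: hn; rewrite -pab av pvu !eqxx orbT.
    by exists m; rewrite -pab -iterSr.
  - by move=> pba; exists n.+1; rewrite iterSr pba.
case=> n hn; have := rank n u; rewrite hn -pvu.
have := Ic v; rewrite pvu (adj_neq huv) => /(_ isT).
lia.
Qed.


Definition Rex (c : 'I_N) : rel 'I_N := [rel a b | adj prox a b && (a != c) && (b != c)].

Lemma Rex_sym c : symmetric (Rex c).
Proof. by move=> a b; rewrite /Rex /= adj_sym -andbA (andbC (a != c)) andbA. Qed.

Lemma Rex_conn_sym c x y : connect (Rex c) x y = connect (Rex c) y x.
Proof. exact: (sym_connect_sym (@Rex_sym c)). Qed.

Lemma Rex_avoid c x y : connect (Rex c) x y -> x != c -> y != c.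
Proof.
move=> h xc; move: h; apply: (@conn_ind _ _ (fun z => z != c)) => // a b.
by case/andP.
Qed.

Lemma Tlem i m x : adj prox i m -> connect (Rex m) i x -> connect (Rex i) m x -> False.
Proof.
move=> him h1 h2; apply: (negP (bridge him)).
apply: (@ctrans _ _ _ x).
  apply: conn_sub h1 => a b /= /andP[/andP[hab ha] hb]; rewrite /Rm /= hab /=.
  by rewrite (negbTE hb) (negbTE ha) !andbF.
rewrite Rex_conn_sym in h2; apply: conn_sub h2 => a b /= /andP[/andP[hab ha] hb]; rewrite /Rm /= hab /=.
by rewrite (negbTE hb) (negbTE ha) !andbF.
Qed.

Lemma conn_split i m j v : connect (Rex i) j v ->
  connect (Rex m) j v \/ connect (Rex i) j m.
Proof.
move=> h.
have: (connect (Rex m) j v /\ connect (Rex i) j v) \/ connect (Rex i) j m.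
  move: h; apply: (@conn_ind _ _ (fun z => (connect (Rex m) j z /\ connect (Rex i) j z)
                                   \/ connect (Rex i) j m)).
    by left; rewrite !connect0.
  move=> y z hyz [[h1 h2]|h]; last by right.
  case: (eqVneq z m) => [ezm|nzm].
    by right; rewrite -ezm; apply: ctrans h2 (connect1 hyz).
  case: (eqVneq y m) => [eym|nym]; first by right; rewrite -eym.
  left; split; last by apply: ctrans h2 (connect1 hyz).
  apply: ctrans h1 (connect1 _).
  by move: hyz => /andP[/andP[h _] _]; rewrite /Rex /= h nzm nym.
by case=> [[]|]; auto.
Qed.

Lemma lemX i m j v : adj prox i m -> branch prox m i j -> branch prox i v j ->
  [/\ branch prox m i v, v != m & ~~ adj prox m v].
Proof.
move=> him /andP[im hij] /andP[vi hvj].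
have vm : v != m.
  by apply/eqP => evm; apply: (Tlem him hij); rewrite -evm.
split => //.
- rewrite /branch im /=; rewrite Rex_conn_sym in hvj.
  case: (conn_split m hvj) => h; first by apply: ctrans hij h.
  by exfalso; apply: (Tlem him hij); rewrite Rex_conn_sym.
- apply/negP => hmv; apply: (Tlem him hij).
  apply: ctrans hvj; apply: connect1; rewrite /Rex /= hmv vi andbT.
  by rewrite eq_sym (adj_neq him).
Qed.

Lemma lemY i m v j : adj prox i m -> branch prox m i v -> branch prox i v j ->
  branch prox m i j.
Proof.
move=> him /andP[im hiv] /andP[vi hvj]; rewrite /branch im /=.
case: (conn_split m hvj) => h; first by apply: ctrans hiv h.
by exfalso; apply: (Tlem him hiv); rewrite Rex_conn_sym.
Qed.

Lemma lemZ i i' m x : adj prox i m -> adj prox i' m -> branch prox m i x ->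
  branch prox m i' x -> i = i'.
Proof.
move=> him him' /andP[_ h1] /andP[_ h2]; apply/eqP/negP => /negP nii'.
apply: (Tlem him' (x := i)).
  by apply: ctrans h2 _; rewrite Rex_conn_sym.
apply: connect1; rewrite /Rex /= adj_sym him /= eq_sym nii' andbT.
exact: (adj_neq him').
Qed.

End Graph.

Local Open Scope ring_scope.

Lemma sum_delta n (F : 'I_n -> rat) x : \sum_c (c == x)%:R * F c = F x.
Proof.
rewrite (bigD1 x) //= eqxx mul1r big1 ?addr0 // => c /negbTE ->; by rewrite mul0r.
Qed.

Section LA.
Variable N : nat.
Variable prox : rel 'I_N.
Hypothesis Hps : proximity_structure prox.

Local Notation P := (Pmx prox).
Local Notation A := ((Pmx prox)^T *m Pmx prox).
Local Notation V := (Vmx prox).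

Lemma PE c x : P c x = (c == x)%:R - (prox c x)%:R.
Proof.
rewrite /Pmx mxE; case: eqP => [->|_]; first by rewrite prox_irr // subr0.
by case: (prox c x); rewrite ?sub0r.
Qed.

Lemma P_unit : P \in unitmx.
Proof.
rewrite unitmxE (det_trig (A := P)); last first.
  apply/is_trig_mxP => i j hij; rewrite PE.
  have -> : (i == j) = false by apply/negbTE; apply: contraTneq hij => ->; rewrite ltnn.
  have -> : prox i j = false by apply/negP => /(prox_lt Hps); lia.
  by rewrite subrr.
rewrite big1 ?unitr1 // => i _; by rewrite PE eqxx prox_irr // subr0.
Qed.

Lemma A_unit : A \in unitmx.
Proof. by rewrite unitmx_mul unitmx_tr P_unit. Qed.

Lemma VA : V *m A = 1%:M.
Proof. exact: (mulVmx A_unit). Qed.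

Lemma AV : A *m V = 1%:M.
Proof. exact: (mulmxV A_unit). Qed.

Lemma Atr : A^T = A.
Proof. by rewrite trmx_mul trmxK. Qed.

Lemma Vsym x y : V x y = V y x.
Proof.
have h : V^T = V by rewrite /Vmx trmx_inv Atr.
by rewrite -{1}h mxE.
Qed.

Lemma AE x y : A x y = \sum_c P c x * P c y.
Proof. by rewrite mxE; apply: eq_bigr => c _; rewrite mxE. Qed.

Lemma count_common x y : x != y ->
  \sum_c ((prox c x)%:R * (prox c y)%:R : rat) = [exists a, prox a x && prox a y]%:R.
Proof.
move=> nxy; case: existsP => [[a /andP[hax hay]]|hn].
  rewrite (bigD1 a) //= hax hay mulr1 big1 ?addr0 // => c nca.
  case hcx: (prox c x); case hcy: (prox c y); rewrite ?mulr0 ?mul0r //.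
  case: Hps => _ _ _ _ H5; by move: nxy; rewrite (H5 _ _ _ _ nca hcx hcy hax hay) eqxx.
rewrite big1 // => c _; case hcx: (prox c x); case hcy: (prox c y); rewrite ?mulr0 ?mul0r //.
by exfalso; apply: hn; exists c; rewrite hcx hcy.
Qed.

Lemma Aoff x y : x != y -> A x y = if adj prox x y then -1 else 0.
Proof.
move=> nxy; rewrite AE.
have -> : \sum_c P c x * P c y = (x == y)%:R - (prox x y)%:R - (prox y x)%:R +
        \sum_c ((prox c x)%:R * (prox c y)%:R : rat).
  rewrite (eq_bigr (fun c => (c == x)%:R * P c y - (prox c x)%:R * (c == y)%:R +
                 (prox c x)%:R * (prox c y)%:R)); last first.
    by move=> c _; rewrite !PE; ring.
  rewrite !big_split /= sum_delta sumrN.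
  rewrite (eq_bigr (fun c => (c == y)%:R * (prox c x)%:R : rat)); last by move=> c _; rewrite mulrC.
  rewrite sum_delta PE; ring.
rewrite count_common // (negbTE nxy) /adj nxy /=.
case: existsP => [[a /andP[hax hay]]|hn] /=.
  case: Hps => H1 _ _ H4 _.
  case: (ltngtP x y) => [h|h|/val_inj e]; last by rewrite e eqxx in nxy.
  - have hyx := H4 _ _ _ hax hay h.
    have -> : prox x y = false by apply/negP => /H1; lia.
    by rewrite hyx andbF /=; ring.
  - have hxy := H4 _ _ _ hay hax h.
    have -> : prox y x = false by apply/negP => /H1; lia.
    by rewrite hxy andbF /=; ring.
rewrite andbT; case hxy: (prox x y); case hyx: (prox y x) => /=.
- by have := (prox_lt Hps hxy); have := prox_lt Hps hyx; lia.
- ring.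
- ring.
- ring.
Qed.

Lemma Aoff_le0 x y : x != y -> A x y <= 0.
Proof. by move=> h; rewrite Aoff //; case: adj; rewrite ?lerN10. Qed.

Definition qf (u : 'rV[rat]_N) : rat := \sum_x (u *m A) 0 x * u 0 x.

Lemma qf_pos u : u != 0 -> 0 < qf u.
Proof.
move=> nu; set w := u *m P^T.
have -> : qf u = \sum_k w 0 k ^+ 2.
  have : qf u = (w *m w^T) 0 0.
    have -> : w *m w^T = u *m A *m u^T by rewrite /w trmx_mul trmxK !mulmxA.
    by rewrite [RHS]mxE; apply: eq_bigr => x _; rewrite [u^T _ _]mxE.
  move=> ->; rewrite mxE; apply: eq_bigr => k _; by rewrite [w^T _ _]mxE expr2.
have nw : w != 0.
  apply: contra nu => /eqP w0; apply/eqP.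
  have : u = w *m invmx P^T by rewrite /w -mulmxA mulmxV ?mulmx1 // unitmx_tr P_unit.
  by rewrite w0 mul0mx.
rewrite lt0r sumr_ge0 ?andbT => [|k _]; last exact: sqr_ge0.
rewrite psumr_neq0 ?has_predT; last by move=> k _; exact: sqr_ge0.
have [k hk] : exists k, w 0 k != 0.
  case: (pickP (fun k => w 0 k != 0)) => [k hk|h]; first by exists k.
  exfalso; apply: (negP nw); apply/eqP/matrixP => i j.
  rewrite (ord1 i); move: (h j) => /= /negbFE /eqP ->; by rewrite mxE.
apply/hasP; exists k; first by rewrite mem_index_enum.
by rewrite /= lt0r sqr_ge0 sqrf_eq0 hk.
Qed.


Lemma qf_le0 u : qf u <= 0 -> u = 0.
Proof.
move=> h; apply/eqP; apply: contraTT h => nu; by rewrite -ltNge qf_pos.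
Qed.

Lemma maxmin0 (a : rat) : Num.max a 0 * Num.min a 0 = 0.
Proof. by rewrite maxEle minEle; case: lerP => h //; rewrite ?mulr0 ?mul0r. Qed.

Lemma green (s : pred 'I_N) (e : rel 'I_N) (h : 'rV[rat]_N) (j : 'I_N) :
  (forall a b, e a b -> [/\ adj prox a b, ~~ s a & ~~ s b]) ->
  (forall a b, adj prox a b -> ~~ s a -> ~~ s b -> e a b) ->
  ~~ s j -> (forall x, s x -> h 0 x = 0) ->
  (forall x, ~~ s x -> (h *m A) 0 x = (x == j)%:R) ->
  forall v, (connect e j v -> 0 < h 0 v) /\ (~~ connect e j v -> h 0 v = 0).
Proof.
move=> He1 He2 sj Hh0 HhA.
have hA x : (h *m A) 0 x = \sum_y h 0 y * A y x by rewrite mxE.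
have hge : forall x, 0 <= h 0 x.
  pose m := \row_x Num.min (h 0 x) 0; pose p := \row_x Num.max (h 0 x) 0.
  have hpm : h = p + m by apply/rowP => x; rewrite !mxE addr_max_min addr0.
  have key : \sum_x (h *m A) 0 x * m 0 x = m 0 j.
    rewrite -(sum_delta (fun x => m 0 x)); apply: eq_bigr => x _.
    case sx: (s x); last by rewrite HhA ?sx.
    by rewrite [m 0 x]mxE (Hh0 x sx) minxx !mulr0.
  have spl : \sum_x (h *m A) 0 x * m 0 x = \sum_x (p *m A) 0 x * m 0 x + qf m.
    rewrite /qf -big_split; apply: eq_bigr => x _ /=.
    by rewrite {1}hpm mulmxDl mxE mulrDl.
  have pos : 0 <= \sum_x (p *m A) 0 x * m 0 x.
    apply: sumr_ge0 => x _; rewrite mxE mulr_suml; apply: sumr_ge0 => y _.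
    case: (eqVneq y x) => [->|nyx].
      by rewrite mulrAC !mxE maxmin0 mul0r.
    rewrite -mulrA; apply: mulr_ge0; first by rewrite mxE le_max lexx orbT.
    apply: mulr_le0; first exact: Aoff_le0.
    by rewrite mxE ge_min lexx orbT.
  have mj : m 0 j <= 0 by rewrite mxE ge_min lexx orbT.
  have m0 : m = 0.
    apply: qf_le0; have : qf m = m 0 j - \sum_x (p *m A) 0 x * m 0 x.
      by rewrite -key spl addrC addKr.
    move=> ->; apply: (le_trans _ mj); rewrite lerBlDr lerDl //.
  move=> x; have := congr1 (fun M : 'rV[rat]_N => M 0 x) m0; rewrite !mxE => ex.
  rewrite leNgt; apply/negP => hlt; move: ex; rewrite minEle (ltW hlt) => ex.
  by rewrite ex ltxx in hlt.
have avoid : forall y, connect e j y -> ~~ s y.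
  apply: (@conn_ind _ _ (fun y => ~~ s y)) => // a b /He1 []; by [].
have van : forall v, ~~ connect e j v -> h 0 v = 0.
  pose k := \row_x (if connect e j x then 0 else h 0 x).
  have kA : forall x, ~~ connect e j x -> ~~ s x -> (k *m A) 0 x = 0.
    move=> x cx sx.
    have xj : x != j by apply: contraNneq cx => ->; exact: connect0.
    suff -> : (k *m A) 0 x = (h *m A) 0 x by rewrite HhA // (negbTE xj).
    rewrite !mxE; apply: eq_bigr => y _; rewrite mxE; case: ifP => cy //.
    have nyx : y != x by apply: contraNneq cx => <-.
    rewrite Aoff //; case: ifP => hyx; last by rewrite !mulr0.
    have sy := avoid _ cy; exfalso; move/negP: cx; apply; apply: ctrans cy (connect1 _).
    by apply: He2.
  have k0 : k = 0.
    apply: qf_le0; rewrite le_eqVlt; apply/orP; left; apply/eqP.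
    apply: big1 => x _.
    case: (boolP (connect e j x)) => cx; first by rewrite [k 0 x]mxE cx mulr0.
    case: (boolP (s x)) => sx; first by rewrite [k 0 x]mxE (negbTE cx) Hh0 // mulr0.
    by rewrite kA // mul0r.
  move=> v cv; have := congr1 (fun M : 'rV[rat]_N => M 0 v) k0; by rewrite !mxE (negbTE cv).
have hj : 0 < h 0 j.
  rewrite lt_neqAle hge andbT eq_sym; apply/negP => /eqP hj0.
  have : (h *m A) 0 j <= 0.
    rewrite hA; apply: sumr_le0 => y _; case: (eqVneq y j) => [->|nyj].
      by rewrite hj0 mul0r.
    by apply: mulr_ge0_le0; [exact: hge | exact: Aoff_le0].
  by rewrite HhA // eqxx ler10.
have posc : forall v, connect e j v -> 0 < h 0 v.
  apply: (@conn_ind _ _ (fun v => 0 < h 0 v)) => // y z eyz hy.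
  have [ayz sy sz] := He1 _ _ eyz.
  rewrite lt_neqAle hge andbT eq_sym; apply/negP => /eqP hz0.
  have zj : z != j by apply: contraTneq hj => ezj; rewrite -ezj hz0 ltxx.
  have : (h *m A) 0 z = 0 by rewrite HhA // (negbTE zj).
  rewrite hA (bigD1 y) //= Aoff ?(adj_neq ayz) // ayz => e0.
  have : \sum_(w | w != y) h 0 w * A w z <= 0.
    apply: sumr_le0 => w _; case: (eqVneq w z) => [->|nwz].
      by rewrite hz0 mul0r.
    by apply: mulr_ge0_le0; [exact: hge | exact: Aoff_le0].
  move: e0 hy; lra.
by move=> v; split; [exact: posc | exact: van].
Qed.

End LA.

Section Main.
Variable N : nat.
Variable prox : rel 'I_N.
Hypothesis Hps : proximity_structure prox.

Local Notation P := (Pmx prox).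
Local Notation A := ((Pmx prox)^T *m Pmx prox).
Local Notation V := (Vmx prox).

Lemma V_green x v : (connect (adj prox) x v -> 0 < V x v) /\
                    (~~ connect (adj prox) x v -> V x v = 0).
Proof.
have He1 : forall a b, adj prox a b -> [/\ adj prox a b, ~~ xpred0 a & ~~ xpred0 b] by [].
have He2 : forall a b, adj prox a b -> ~~ xpred0 a -> ~~ xpred0 b -> adj prox a b by [].
have Hh0 : forall y, xpred0 y -> row x V 0 y = 0 by [].
have HhA : forall y, ~~ xpred0 y -> (row x V *m A) 0 y = (y == x)%:R.
  by move=> y _; rewrite -row_mul (VA Hps) !mxE eq_sym.
have [h1 h2] := @green _ _ Hps xpred0 (adj prox) (row x V) x He1 He2 isT Hh0 HhA v.
by rewrite mxE in h1 h2; split.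
Qed.

Lemma V_ge0 x v : 0 <= V x v.
Proof.
have [h1 h2] := V_green x v; case: (boolP (connect (adj prox) x v)) => c.
  by apply: ltW; apply: h1.
by rewrite h2.
Qed.

Lemma Vii_gt0 i : 0 < V i i.
Proof. by have [h1 _] := V_green i i; apply: h1; apply: connect0. Qed.

Definition Dv (i j v : 'I_N) : rat := V j v - rho prox i j i * V i v.

Lemma Dv_spec i j v : (branch prox i v j -> 0 < Dv i j v) /\
                      (~~ branch prox i v j -> Dv i j v = 0).
Proof.
have Vii := Vii_gt0 i.
case: (eqVneq j i) => [->|nji].
  have nb : ~~ branch prox i v i.
    apply/negP => /andP[vi c]; have := Rex_avoid c vi; by rewrite eqxx.
  split; first by rewrite (negbTE nb).
  by move=> _; rewrite /Dv /rho divff ?mul1r ?subrr // gt_eqF.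
case: (eqVneq v i) => [->|nvi].
  split; first by rewrite /branch eqxx.
  by move=> _; rewrite /Dv /rho mulfVK ?subrr // gt_eqF.
pose c := V j i / V i i.
have He1 : forall a b, Rex prox i a b -> [/\ adj prox a b, ~~ pred1 i a & ~~ pred1 i b].
  by move=> a b /andP[/andP[h1 h2] h3]; split.
have He2 : forall a b, adj prox a b -> ~~ pred1 i a -> ~~ pred1 i b -> Rex prox i a b.
  by move=> a b h1 h2 h3; rewrite /Rex /= h1 h2 h3.
have Hh0 : forall x, pred1 i x -> (row j V - c *: row i V) 0 x = 0.
  move=> x /= /eqP ->; rewrite !mxE /c mulfVK ?subrr // gt_eqF //.
have HhA : forall x, ~~ pred1 i x -> ((row j V - c *: row i V) *m A) 0 x = (x == j)%:R.
  move=> x /= nxi; rewrite mulmxBl -scalemxAl -!row_mul (VA Hps) !mxE eq_sym.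
  by rewrite [i == x]eq_sym (negbTE nxi) mulr0 subr0.
have [H1 H2] := @green _ _ Hps (pred1 i) (Rex prox i) _ j He1 He2 nji Hh0 HhA v.
rewrite !mxE -/(Dv i j v) in H1 H2.
have eb : branch prox i v j = connect (Rex prox i) j v.
  by rewrite /branch nvi /= Rex_conn_sym.
by rewrite eb; split.
Qed.

Lemma Dv_ge0 i j v : 0 <= Dv i j v.
Proof.
have [h1 h2] := Dv_spec i j v; case: (boolP (branch prox i v j)) => c.
  by apply: ltW; apply: h1.
by rewrite h2.
Qed.

Lemma Q_ge0 v x : 0 <= Qmx prox v x.
Proof.
have QP : Qmx prox *m P = 1%:M by apply: mulVmx; apply: P_unit.
have eqn y : Qmx prox v y = (v == y)%:R + \sum_z (prox z y)%:R * Qmx prox v z.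
  have := congr1 (fun M : 'M[rat]_N => M v y) QP; rewrite !mxE => e.
  rewrite -e (eq_bigr (fun z => Qmx prox v z * (z == y)%:R - (prox z y)%:R * Qmx prox v z)).
    rewrite sumrB.
    rewrite (eq_bigr (fun z => (z == y)%:R * Qmx prox v z)) ?sum_delta; last by move=> z _; rewrite mulrC.
    by rewrite subrK.
  by move=> z _; rewrite (PE Hps); ring.
suff H n : forall y : 'I_N, (N - y <= n)%N -> 0 <= Qmx prox v y.
  by apply: (H (N - x)%N).
elim: n => [|n IH] y hy.
  by have := ltn_ord y; lia.
rewrite eqn; apply: addr_ge0; first by case: (v == y).
apply: sumr_ge0 => z _; case hz: (prox z y); last by rewrite mul0r.
rewrite mul1r; apply: IH; have := prox_lt Hps hz; have := ltn_ord z; lia.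
Qed.

Lemma K_ge0 v : 0 <= Kcoef prox 0 v.
Proof.
by rewrite /Kcoef summxE; apply: sumr_ge0 => x _; rewrite mxE; apply: Q_ge0.
Qed.

Lemma unitvV j v : (unitv j *m V) 0 v = V j v.
Proof.
rewrite mxE -(sum_delta (fun k => V k v) j); apply: eq_bigr => k _; by rewrite mxE.
Qed.

Lemma rhatV i j v : (rhat prox i j *m V) 0 v = Dv i j v.
Proof.
rewrite /rhat /Dv mulmxBl -scalemxAl -(unitvV j v) -(unitvV i v).
move: (unitv j *m V) (unitv i *m V) => a b; by rewrite !mxE.
Qed.

End Main.

Unset Implicit Arguments. Set Strict Implicit. Set Printing Implicit Defensive.

Theorem mainTheorem8 (N : nat) (prox : rel 'I_N) (mu : 'I_N) (f g : 'rV[rat]_N) :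
  proximity_structure prox ->
  is_divisor f -> antinef prox f -> f != 0 ->
  is_divisor g -> antinef prox g ->
  forall nu : 'I_N,
    lambda prox g f nu <= lambda prox g (modE prox mu f) nu /\
    (lambda prox g (modE prox mu f) nu = lambda prox g f nu <->
       ((mu == nu) || adj prox mu nu) \/
       (forall i, adj prox i mu -> branch prox mu i nu ->
          forall j, branch prox i nu j -> fhat prox f 0 j = 0)).
Proof.
move=> Hps _ Hf _ _ Hg v.
set V := Vmx prox.
set fh := fhat prox f.
have fE : f = fh *m V by rewrite /fh /fhat -mulmxA (AV Hps) mulmx1.
have gE : g = fhat prox g *m V by rewrite /fhat -mulmxA (AV Hps) mulmx1.
have fv : f 0 v = \sum_x fh 0 x * V x v by rewrite {1}fE mxE.
have fh0 x : 0 <= fh 0 x by apply: Hf.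
set Delta := \sum_(i | adj prox i mu) \sum_(j | branch prox mu i j) fh 0 j * Dv prox i j v.
have term0 i j : 0 <= fh 0 j * Dv prox i j v by apply: mulr_ge0 => //; apply: Dv_ge0.
have D0 : 0 <= Delta by apply: sumr_ge0 => i _; apply: sumr_ge0 => j _.
have mE : modE prox mu f 0 v = f 0 v - Delta.
  rewrite /modE /modhat -/fh mulmxBl -fE mulmx_suml.
  rewrite mxE; congr (_ + _); rewrite mxE summxE; congr (- _).
  apply: eq_bigr => i _.
  rewrite mulmx_suml summxE; apply: eq_bigr => j _.
  by rewrite -scalemxAl mxE rhatV.
have fv0 : 0 <= f 0 v by rewrite fv; apply: sumr_ge0 => x _; apply: mulr_ge0 => //; apply: V_ge0.
have num : 0 < g 0 v + Kcoef prox 0 v + 1.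
  have : 0 <= g 0 v.
    rewrite gE mxE; apply: sumr_ge0 => x _; apply: mulr_ge0; [exact: Hg| exact: V_ge0].
  have := K_ge0 Hps v; lra.
rewrite /lambda mE.
have inner0 i' : adj prox i' mu -> 0 <= \sum_(j | branch prox mu i' j) fh 0 j * Dv prox i' j v.
  by move=> _; apply: sumr_ge0 => k _.
have C_of_D : Delta = 0 -> forall i, adj prox i mu -> forall j, branch prox mu i j ->
                branch prox i v j -> fh 0 j = 0.
  move=> HD i hi j hj hb.
  have h2 := psumr_eq0P inner0 HD hi.
  have h3 := psumr_eq0P (fun (j' : 'I_N) (_ : branch prox mu i j') => term0 i j') h2 hj.
  move/eqP: h3.
  rewrite mulf_eq0 => /orP[/eqP //|].
  by have [h1 _] := Dv_spec Hps i j v; rewrite gt_eqF // h1.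
case: (eqVneq Delta 0) => [HD|HD].
  rewrite HD subr0; split=> //; split=> // _.
  case: (boolP ((mu == v) || adj prox mu v)) => H; [by left | right].
  move=> i hi hv j hj; apply: (C_of_D HD i hi j _ hj).
  exact: (lemY Hps hi hv hj).
have Dpos : 0 < Delta by rewrite lt_def HD D0.
have HD' : Delta <> 0 by move/eqP; rewrite (negbTE HD).
have [i0 /andP[hi0 pin]] := psumr_neq0P inner0 HD'.
have pin' : \sum_(j | branch prox mu i0 j) fh 0 j * Dv prox i0 j v <> 0.
  by move=> e; rewrite e ltxx in pin.
have [j0 /andP[hj0 ptj]] :=
  psumr_neq0P (fun (j' : 'I_N) (_ : branch prox mu i0 j') => term0 i0 j') pin'.
have hfj : 0 < fh 0 j0.
  rewrite lt_def fh0 andbT; apply: contraTneq ptj => ->; by rewrite mul0r ltxx.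
have hb : branch prox i0 v j0.
  case: (boolP (branch prox i0 v j0)) => // nb.
  by have [_ h2] := Dv_spec Hps i0 j0 v; move: ptj; rewrite h2 // mulr0 ltxx.
have [bv vm nadj] := lemX Hps hi0 hj0 hb.
have DeltaE : Delta = \sum_(j | branch prox mu i0 j) fh 0 j * Dv prox i0 j v.
  rewrite /Delta (bigD1 i0) //= [X in _ + X]big1 ?addr0 // => i /andP[hi ni].
  apply: big1 => j hj; have [_ h2] := Dv_spec Hps i j v.
  case: (boolP (branch prox i v j)) => hb'; last by rewrite h2 // mulr0.
  have [bv' _ _] := lemX Hps hi hj hb'.
  by rewrite (lemZ Hps hi hi0 bv' bv) eqxx in ni.
have Vii := Vii_gt0 Hps i0.
have cadj x : branch prox mu i0 x -> 0 < V x i0 /\ 0 < V i0 x.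
  move=> /andP[_ c].
  have c' : connect (adj prox) i0 x by apply: conn_sub c => a b /andP[/andP[]].
  have [h1 _] := V_green Hps i0 x; have [h1' _] := V_green Hps x i0.
  split; [apply: h1' | apply: h1] => //.
  by rewrite (sym_connect_sym (@adj_sym N prox)).
have fpos : 0 < f 0 v - Delta.
  have e1 : \sum_(x | branch prox mu i0 x) fh 0 x * (V x i0 / V i0 i0 * V i0 v) =
      \sum_(x | branch prox mu i0 x) fh 0 x * V x v - Delta.
    rewrite DeltaE -sumrB; apply: eq_bigr => x _; rewrite /Dv /rho; ring.
  have -> : f 0 v - Delta = \sum_(x | ~~ branch prox mu i0 x) fh 0 x * V x v +
      \sum_(x | branch prox mu i0 x) fh 0 x * (V x i0 / V i0 i0 * V i0 v).
    by rewrite e1 fv (bigID (branch prox mu i0)) /=; ring.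
  have s1 : 0 <= \sum_(x | ~~ branch prox mu i0 x) fh 0 x * V x v.
    by apply: sumr_ge0 => x _; apply: mulr_ge0 => //; apply: V_ge0.
  rewrite [X in _ < _ + X](bigD1 j0) //=.
  have t1 : 0 < fh 0 j0 * (V j0 i0 / V i0 i0 * V i0 v).
    have [h1 _] := cadj _ hj0; have [_ h2] := cadj _ bv.
    by apply: mulr_gt0 => //; apply: mulr_gt0 => //; apply: divr_gt0.
  have s2 : 0 <= \sum_(x | branch prox mu i0 x && (x != j0)) fh 0 x * (V x i0 / V i0 i0 * V i0 v).
    apply: sumr_ge0 => x /andP[hx _]; apply: mulr_ge0 => //.
    by apply: mulr_ge0; [apply: divr_ge0; apply: V_ge0 | apply: V_ge0].
  lra.
have flt : f 0 v - Delta < f 0 v by lra.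
have strict : (g 0 v + Kcoef prox 0 v + 1) / f 0 v <
              (g 0 v + Kcoef prox 0 v + 1) / (f 0 v - Delta).
  rewrite ltr_pM2l // ltf_pV2 ?posrE //; lra.
split; first exact: ltW.
split.
  by move=> e; move: strict; rewrite e ltxx.
case=> [/orP[/eqP e|hadj]|H].
- by move: vm; rewrite e eqxx.
- by move: nadj; rewrite hadj.
- by move: hfj; rewrite (H i0 hi0 bv j0 hb) ltxx.
Qed.
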